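(* Let $p>2$ be a prime, $n\ge1$, $A$ a finite abelian $p$-group (written additively) and $G$ a group containing $A$ as a normal subgroup with $G/A\cong\mathbb{Z}_{p^n}$, generated by the image of an element $t\in G$. Let $\psi:A\to A$ be $\psi(a)=t^{-1}at$. Suppose $[e]_\varphi$ is a subgroup of $G$ for every $\varphi\in{\rm Aut}\,G$. Then for every $a\in\Omega_1(A)$ one has $(\mathrm{id}+\psi+\psi^2+\dots+\psi^{p^n-1})(a)=0$; equivalently, the assignment $d(\bar t)=a$ extends to a derivation $d:G/A\to A$.
   Context: For an automorphism $\varphi$ of $G$, $[e]_\varphi=\{z^{-1}\varphi(z)\mid z\in G\}$. $\Omega_k(A)=\{a\in A\mid p^k a=0\}$. $G/A$ acts on the abelian normal subgroup $A$ by conjugation, $a^{\bar g}=g^{-1}ag$. A derivation $d:G/A\to A$ is a map with $d(h_1h_2)=d(h_1)+d(h_2)^{h_1}$ for all $h_1,h_2$; for a cyclic group $\langle \bar t\rangle$ of order $p^n$, a value $d(\bar t)=a$ extends to a derivation iff $(\mathrm{id}+\psi+\dots+\psi^{p^n-1})a=0$, in which case $d(\bar t^k)=(\mathrm{id}+\psi+\dots+\psi^{k-1})a$. *)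

(* Defs.v *)
From HB Require Import structures.
From mathcomp Require Import all_boot all_order all_fingroup all_solvable.
Set Implicit Arguments. Unset Strict Implicit. Unset Printing Implicit Defensive.

Definition e_class (gT : finGroupType) (G : {set gT}) (phi : {perm gT}) : {set gT} :=
  [set (z^-1 * phi z)%g | z in G].

(* Main.v *)
Require Import Defs.
From HB Require Import structures.
From mathcomp Require Import all_boot all_order all_fingroup all_solvable.
Set Implicit Arguments. Unset Strict Implicit. Unset Printing Implicit Defensive.
Local Open Scope group_scope.
Section AbProd.
Variables (gT : finGroupType) (H : {group gT}).
Hypothesis cHH : abelian H.

Lemma comH x y : x \in H -> y \in H -> commute x y.
Proof. by move=> xH yH; apply: (centsP cHH). Qed.

Lemma prodA_split (I : eqType) (r : seq I) (F G : I -> gT) :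
  {in r, forall i, F i \in H} -> {in r, forall i, G i \in H} ->
  \prod_(i <- r) (F i * G i) = \prod_(i <- r) F i * \prod_(i <- r) G i.
Proof.
elim: r => [|x r IH] FH GH; first by rewrite !big_nil mulg1.
have FH' : {in r, forall i, F i \in H} by move=> i ir; apply: FH; rewrite in_cons ir orbT.
have GH' : {in r, forall i, G i \in H} by move=> i ir; apply: GH; rewrite in_cons ir orbT.
rewrite !big_cons IH //.
have PF : \prod_(i <- r) F i \in H by rewrite big_seq; apply: group_prod.
by rewrite -!mulgA; congr (_ * _); rewrite !mulgA (comH (GH x (mem_head _ _)) PF).
Qed.

Lemma prodA_rem (I : eqType) (r : seq I) (F : I -> gT) x :
  {in r, forall i, F i \in H} -> x \in r ->
  \prod_(i <- r) F i = F x * \prod_(i <- rem x r) F i.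
Proof.
elim: r => [|y r IH] //= FH xr.
case: eqP => [->|nyx]; first by rewrite big_cons.
rewrite in_cons in xr; case/orP: xr => [/eqP xy|xr]; first by case: nyx.
have FH' : {in r, forall i, F i \in H} by move=> i ir; apply: FH; rewrite in_cons ir orbT.
rewrite !big_cons IH // !mulgA (comH (FH y (mem_head _ _)) (FH x _)) //.
by rewrite in_cons xr orbT.
Qed.

Lemma prodA_perm (I : eqType) (r1 r2 : seq I) (F : I -> gT) :
  {in r2, forall i, F i \in H} -> perm_eq r1 r2 ->
  \prod_(i <- r1) F i = \prod_(i <- r2) F i.
Proof.
elim: r1 r2 => [|x r1 IH] r2 FH pe.
  by move: (perm_size pe) => /= /esym /size0nil ->.
have xr2 : x \in r2 by rewrite -(perm_mem pe) mem_head.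
rewrite big_cons (prodA_rem FH xr2); congr (_ * _); apply: IH.
  by move=> i /mem_rem; apply: FH.
by rewrite -(perm_cons x); apply: perm_trans pe (perm_to_rem xr2).
Qed.

End AbProd.
Theorem mainTheorem10 (gT : finGroupType) (G A : {group gT}) (t : gT) (p n : nat) :
  prime p -> 2 < p -> 0 < n ->
  A <| G -> abelian A -> p.-group A ->
  t \in G ->
  G / A = <[coset A t]> -> #[coset A t] = (p ^ n)%N ->
  (forall phi : {perm gT}, phi \in Aut G -> group_set (e_class G phi)) ->
  forall a, a \in A -> a ^+ p = 1 ->
    \prod_(i < p ^ n) (a ^ (t ^+ i)) = 1.
Proof.
move=> pr_p p_gt2 n_gt0 nAG cAA pA tG quoG ordt hE a aA ap.
set N := (p ^ n)%N.
have N_gt0 : (0 < N)%N by rewrite expn_gt0 prime_gt0.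
have AG : A \subset G := normal_sub nAG.
have tN : t \in 'N(A) := subsetP (normal_norm nAG) t tG.
have tNA : t ^+ N \in A.
  by apply: coset_idr; [rewrite groupX | rewrite morphX // /N -ordt expg_order].
set f := fun i => a ^ (t ^+ i).
have fA i : f i \in A by rewrite /f memJ_norm // groupX.
have fp i : f i ^+ p = 1 by rewrite /f -conjXg ap conj1g.
have fD i j : f (i + j)%N = f i ^ (t ^+ j) by rewrite /f expgD conjgM.
have fN : f N = a.
  by rewrite /f; apply/conjg_fixP/commgP; exact: (comH cAA aA tNA).
have hper k q r : f k = a -> f (q * k + r)%N = f r.
  move=> fk; elim: q => [|q IH]; first by rewrite mul0n add0n.
  by rewrite mulSn -addnA fD fk.
pose W x := (x \in A) && (x ^+ p == 1).
have W1 : W 1 by rewrite /W group1 expg1n eqxx.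
have WM x y : W x -> W y -> W (x * y).
  case/andP=> xA /eqP xp /andP [yA /eqP yp].
  rewrite /W groupM // expgMn; first by rewrite xp yp mulg1 eqxx.
  exact: (comH cAA xA yA).
have hP : exists m, (0 < m)%N && (f m == a) by exists N; rewrite N_gt0 fN eqxx.
case: (ex_minnP hP) => m /andP [m_gt0 /eqP fm] minm.
have m_le_N : (m <= N)%N by apply: minm; rewrite N_gt0 fN eqxx.
have mN : (m %| N)%N.
  have fr : f (N %% m)%N = a by rewrite -(hper m (N %/ m)%N) // -divn_eq fN.
  rewrite /dvdn; case rE: (N %% m)%N fr => [//|r] fr.
  have := ltn_pmod N m_gt0; rewrite rE ltnNge => /negP; case.
  by apply: minm; rewrite fr eqxx.
change (\prod_(i < N) f i = 1).
have blk q : \prod_(i < q * m) f i = (\prod_(i < m) f i) ^+ q.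
  elim: q => [|q IH]; first by rewrite mul0n big_ord0 expg0.
  rewrite -!(big_mkord xpredT) in IH *.
  rewrite mulSnr (big_cat_nat (leq0n _) (leq_addr m (q * m))) /= IH expgSr.
  congr (_ * _); rewrite -{1}(add0n (q * m)%N) big_addn addKn.
  by apply: eq_bigr => i _; rewrite addnC hper.
have WX : W (\prod_(i < m) f i).
  by apply: (big_ind W) => // i _; rewrite /W fA fp eqxx.
have [mltN|] := ltnP m N.
  set q := (N %/ m)%N.
  have Nqm : N = (q * m)%N by rewrite divnK.
  have q_gt1 : (1 < q)%N.
    rewrite ltnNge; apply/negP => q1; move: mltN; rewrite Nqm ltnNge; case/negP.
    by rewrite -{2}(mul1n m) leq_mul2r q1 orbT.
  have pq : (p %| q)%N.
    have : (q %| N)%N by rewrite Nqm dvdn_mulr.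
    case/(dvdn_pfactor _ _ pr_p) => j _ qj; move: q_gt1; rewrite qj.
    by case: j {qj} => [|j]; rewrite ?expn0 // expnS => _; apply: dvdn_mulr.
  rewrite Nqm blk; move: WX => /andP [_ /eqP Xp].
  by rewrite -(divnK pq) mulnC expgM Xp expg1n.
move=> Nlem; have mN' : m = N by apply/eqP; rewrite eqn_leq m_le_N.
have finj i j : (i < N)%N -> (j < N)%N -> f i = f j -> i = j.
  wlog ij : i j / (i <= j)%N.
    move=> hw iN jN fij; case/orP: (leq_total i j) => hij; first exact: hw.
    by apply/esym; apply: hw.
  move=> iN jN fij; have jE := subnK ij; set d := (j - i)%N in jE.
  case: (posnP d) => [d0|d_gt0]; first by rewrite -jE d0.
  have fd : f d = a.
    apply: (@conjg_inj _ (t ^+ i)); rewrite -fD jE; exact: (esym fij).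
  have : (m <= d)%N by apply: minm; rewrite d_gt0 fd eqxx.
  rewrite mN' leqNgt => /negP; case.
  by apply: leq_ltn_trans jN; rewrite /d leq_subr.
have aG : a \in G := subsetP AG a aA.
set phi := conj_aut G a.
have phiAut : phi \in Aut G by exact: Aut_aut.
have key z : z \in G -> z^-1 * phi z = (a ^ z)^-1 * a.
  by move=> zG; rewrite /phi conj_autE // -conjVg !conjgE !mulgA.
set E := e_class G phi.
have gEs : group_set E := hE _ phiAut.
set g := fun i => (f i)^-1 * a.
have gA i : g i \in A by rewrite /g groupM ?groupV.
have Wg i : W (g i).
  apply: WM; last by rewrite /W aA ap eqxx.
  by rewrite /W groupV fA expVgn fp invg1 eqxx.
have gE i : g i \in E.
  by apply/imsetP; exists (t ^+ i); rewrite ?groupX // key ?groupX.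
have Eg x : x \in E -> exists i : 'I_N, x = g i.
  case/imsetP => z zG ->; rewrite key //.
  have zN : z \in 'N(A) := subsetP (normal_norm nAG) z zG.
  have : coset A z \in <[coset A t]> by rewrite -quoG mem_quotient.
  case/cycleP => i; rewrite -morphX // => /(rcoset_kercosetP zN (groupX i tN)).
  case/rcosetP => b bA ->; exists (Ordinal (ltn_pmod i N_gt0)); rewrite /g /=.
  have -> : f (i %% N)%N = f i by rewrite {2}(divn_eq i N) hper.
  rewrite conjgM; congr ((_ ^ _)^-1 * _).
  by apply/conjg_fixP/commgP; exact: (comH cAA aA bA).
have ginj : injective (fun i : 'I_N => g i).
  move=> i j; rewrite /g /= => /mulIg /(congr1 invg); rewrite !invgK => fij; apply: val_inj; exact: finj (ltn_ord i) (ltn_ord j) fij.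
have EA : {in enum E, forall x, x \in A}.
  by move=> x; rewrite mem_enum => /Eg [i ->].
set Q := \prod_(i < N) g i.
have QE : Q = \prod_(x <- enum E) x.
  rewrite /Q -(big_map (fun i : 'I_N => g i) xpredT (fun x => x)).
  apply: (prodA_perm cAA EA); apply: uniq_perm.
  - by rewrite map_inj_uniq // index_enum_uniq.
  - exact: enum_uniq.
  move=> x; rewrite mem_enum; apply/mapP/idP => [[i _ ->] // | /Eg [i ->]].
  by exists i; rewrite ?mem_index_enum.
have WQ : W Q.
  rewrite QE big_seq; apply: (big_ind W) => // x; rewrite mem_enum.
  by case/Eg => i ->.
have QQ : Q * Q = 1.
  have EAV : {in enum E, forall x, x^-1 \in A}.
    by move=> x /EA; rewrite groupV.
  rewrite {2}QE (prodA_perm cAA (r2 := map invg (enum E))).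
  - rewrite big_map QE -(prodA_split cAA EA EAV).
    by rewrite big1_seq // => x _; rewrite mulgV.
  - by move=> x /mapP [y /EA yA ->]; rewrite groupV.
  apply: uniq_perm; first exact: enum_uniq.
    by rewrite map_inj_uniq ?enum_uniq //; apply: invg_inj.
  move=> x; apply/idP/mapP => [xE | [y yE ->]].
    by exists x^-1; rewrite ?invgK // mem_enum (groupV (Group gEs)) -mem_enum.
  by rewrite mem_enum (groupV (Group gEs)) -mem_enum.
have Q1 : Q = 1.
  move: WQ => /andP [_ /eqP Qp].
  have oddp : odd p by case: (even_prime pr_p) => // p2; rewrite p2 in p_gt2.
  move: Qp; rewrite -(odd_double_half p) oddp -muln2 mulnC expgD expgM.
  by rewrite expg2 QQ expg1n mulg1 expg1.
have iterE k : iter k (mulg a) 1 = a ^+ k.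
  by elim: k => [|k IH] //=; rewrite IH expgS.
rewrite (eq_bigr (fun i : 'I_N => a * (g i)^-1)); last first.
  by move=> i _; rewrite /g invMg invgK mulKVg.
rewrite (prodA_split cAA (r := index_enum 'I_N) (F := fun _ => a)
  (G := fun i : 'I_N => (g i)^-1)) //; last by move=> i _; rewrite groupV.
rewrite big_const_ord iterE.
have -> : a ^+ N = 1.
  by rewrite /N -(prednK n_gt0) expnS expgM ap expg1n.
rewrite mul1g.
have : Q * \prod_(i < N) (g i)^-1 = 1.
  rewrite /Q -(prodA_split cAA (r := index_enum 'I_N)) //; last by move=> i _; rewrite groupV.
  by rewrite big1 // => i _; rewrite mulgV.
by rewrite Q1 mul1g.
Qed.
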